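(* Let $T$ be a tree on $n$ leaves and let $S$ be a minimal isolating set of $T$. Consider the forest $F$ obtained from $T$ by removing all edges in $S$. Then each connected component of $F$ contains exactly one leaf of $T$.
   Context: For a tree $T=(V,E)$, a subset $S\subseteq E$ is an isolating set if for any two distinct leaves $u,v$ there is an edge of $S$ on the path connecting $u$ and $v$. It is minimal if no proper subset of $S$ is an isolating set. *)

(* Defs.v *)
(* A finite simple graph is a symmetric irreflexive relation
   [e : rel V] on a finite vertex type [V]; edges are 2-element vertex sets. *)
From mathcomp Require Import all_boot.
Set Implicit Arguments. Unset Strict Implicit. Unset Printing Implicit Defensive.

Section Trees.
Variable V : finType.

Definition simple_graph (e : rel V) : Prop := symmetric e /\ irreflexive e.

Definition edges (e : rel V) : {set {set V}} :=
  [set E : {set V} | [exists u, exists v, e u v && (E == [set u; v])]].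

Definition has_cycle (e : rel V) : Prop :=
  exists c : seq V, [/\ 3 <= size c, uniq c & cycle e c].

Definition is_tree (e : rel V) : Prop :=
  [/\ simple_graph e, (forall u v, connect e u v) & ~ has_cycle e].

Definition is_leaf (e : rel V) (v : V) : bool := #|[set w | e v w]| == 1.

(* simple path from u to v given as u :: p *)
Definition simple_path (e : rel V) (u v : V) (p : seq V) : bool :=
  [&& path e u p, uniq (u :: p) & last u p == v].

Definition path_meets (S : {set {set V}}) (u : V) (p : seq V) : bool :=
  has (fun xy => [set xy.1; xy.2] \in S) (zip (u :: p) p).

(* S is an isolating set: S is a set of edges, and every path between two
   distinct leaves (in a tree this path is unique) contains an edge of S *)
Definition isolating (e : rel V) (S : {set {set V}}) : Prop :=
  S \subset edges e /\
  forall u v p, is_leaf e u -> is_leaf e v -> u != v ->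
    simple_path e u v p -> path_meets S u p.

Definition minimal_isolating (e : rel V) (S : {set {set V}}) : Prop :=
  isolating e S /\ forall S' : {set {set V}}, S' \proper S -> ~ isolating e S'.

Definition remove_edges (e : rel V) (S : {set {set V}}) : rel V :=
  fun u v => e u v && ([set u; v] \notin S).

End Trees.

(* Main.v *)
Require Import Defs.
From mathcomp Require Import all_boot.
Set Implicit Arguments. Unset Strict Implicit. Unset Printing Implicit Defensive.

Section Aux.
Variable V : finType.
Variable e : rel V.

Lemma set2_sym (u v : V) : [set u; v] = [set v; u].
Proof. by rewrite setUC. Qed.

Lemma rem_sym S : symmetric e -> symmetric (remove_edges e S).
Proof. by move=> se u v; rewrite /remove_edges se set2_sym. Qed.

Lemma nomeet S u p : path (remove_edges e S) u p -> ~~ path_meets S u p.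
Proof.
elim: p u => [|y p IH] u //= /andP[/andP[_ H1] H2].
rewrite negb_or H1 /=; exact: IH.
Qed.

Lemma meet_path S u p : path e u p -> ~~ path_meets S u p ->
  path (remove_edges e S) u p.
Proof.
elim: p u => [|y p IH] u //= /andP[H1 H2]; rewrite negb_or => /andP[H3 H4].
by rewrite /remove_edges H1 H3 /= IH.
Qed.

Lemma at_most_one S u v : symmetric e -> isolating e S -> is_leaf e u -> is_leaf e v ->
  connect (remove_edges e S) u v -> u = v.
Proof.
move=> se [_ iso] lu lv /connectP[p pp vE]; subst v.
case: (eqVneq u (last u p)) => // ne.
case: (shortenP pp) ne lv => p' pp' up' _ ne lv.
have := iso u (last u p') p' lu lv ne.
rewrite /simple_path up' eqxx (sub_path _ pp') ?andbT; last by move=> a b /andP[].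
by move/(_ isT); rewrite (negbTE (nomeet pp')).
Qed.

Lemma leaf_exists : is_tree e -> 2 <= #|V| -> exists l, is_leaf e l.
Proof.
move=> [[se ie] con nocyc] cV.
pose P n := [exists x, exists t : n.+1.-tuple V, path e x t && uniq (x :: t)].
have exP : exists n, P n.
  have [x _] : exists x : V, true.
    by move: cV; case: (pickP (@predT V)) => [x|/eq_card0 ->] //; exists x.
  have [y xy] : exists y, y != x.
    apply/existsP; apply: contraLR cV; rewrite negb_exists => /forallP H.
    rewrite -leqNgt; apply/fintype_le1P => z z'.
    by have := H z; have := H z'; rewrite !negbK => /eqP -> /eqP ->.
  have /connectP[q qp qy] := con x y.
  case: q qp qy => [|z q] /=; first by move=> _ yx; rewrite yx eqxx in xy.
  move=> /andP[exz _] _; exists 0; apply/existsP; exists x; apply/existsP.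
  exists [tuple z]; rewrite /= exz mem_seq1 /= andbT.
  by apply/eqP => xz; rewrite xz (ie z) in exz.
have ub : forall n, P n -> n <= #|V|.
  move=> n /existsP[x /existsP[t /andP[_ /card_uniqP ut]]].
  have := max_card (mem (x :: tval t)); rewrite ut /= size_tuple => h.
  exact: leq_trans (leqW (leqnSn n)) h.
case: (ex_maxnP exP ub) => n /existsP[x /existsP[t /andP[pt ut]]] maxn.
set p := tval t in pt ut.
have sp : size p = n.+1 by rewrite size_tuple.
case/lastP: {t} p sp pt ut => [//|p' v] sp pt ut.
exists v; apply/eqP; apply: (@eq_card1 _ (last x p')) => w; rewrite !inE.
have pe := pt; rewrite rcons_path in pe; case/andP: pe => pp' ev.
apply/idP/idP; last by move/eqP->; rewrite se.
move=> evw; apply/eqP.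
have [win|wout] := boolP (w \in x :: rcons p' v).
  have wv : w != v by apply/eqP => wv; rewrite wv (ie v) in evw.
  have win2 : w \in x :: p'.
    by move: win; rewrite -rcons_cons mem_rcons inE (negbTE wv).
  have [q1 [q2 lE]] : exists q1 q2, x :: p' = q1 ++ w :: q2.
    by case/splitPr: win2 => q1 q2; exists q1, q2.
  have lE2 : x :: rcons p' v = q1 ++ w :: rcons q2 v.
    by rewrite -rcons_cons lE rcons_cat.
  case: q2 lE lE2 => [|z q2] lE lE2.
    have : last x (x :: p') = last x (q1 ++ [:: w]) by rewrite lE.
    by rewrite last_cat.
  exfalso; apply: nocyc; exists (w :: rcons (z :: q2) v); split.
  - by rewrite /= size_rcons.
  - by move: ut; rewrite lE2 cat_uniq => /and3P[].
  - rewrite /cycle rcons_path last_rcons evw andbT.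
    clear lE; case: q1 lE2 => [|y q1] /= [xE rE].
      by move: pt; rewrite rE xE.
    by move: pt; rewrite rE cat_path /= => /andP[_ /andP[]].
suff: n.+1 <= n by rewrite ltnn.
apply: maxn; apply/existsP; exists x; apply/existsP.
have sz : size (rcons (rcons p' v) w) == n.+2 by rewrite size_rcons sp.
exists (Tuple sz) => /=.
rewrite rcons_path pt /= last_rcons evw /=.
change (uniq (x :: rcons (rcons p' v) w)).
by rewrite -rcons_cons rcons_uniq wout.
Qed.
Lemma boundary (F : rel V) x q a : connect F x a -> path e a q ->
  ~~ connect F x (last a q) -> exists a' b, [/\ connect F x a', ~~ connect F x b & e a' b].
Proof.
elim: q a => [|y q IH] a /= xa; first by rewrite xa.
case/andP=> ay pq nl.
case xy: (connect F x y); first exact: IH xy pq nl.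
by exists a, y; rewrite xy.
Qed.
End Aux.

Unset Implicit Arguments.
Set Strict Implicit.

Theorem proposition3 (V : finType) (e : rel V) (n : nat) (S : {set {set V}}) :
  is_tree e -> 2 <= #|V| -> #|[set v | is_leaf e v]| = n ->
  minimal_isolating e S ->
  forall x : V,
    #|[set l | is_leaf e l & connect (remove_edges e S) x l]| = 1.
Proof.
move=> tr cV _ [iso minS] x.
have [[se ie] con nocyc] := tr.
set F := remove_edges e S.
have sF := rem_sym S se.
have cs : connect_sym F := sym_connect_sym sF.
case: (pickP (fun l => is_leaf e l && connect F x l)) => [l /andP[ll xl] | none].
  apply: (@eq_card1 _ l) => w; rewrite !inE.
  apply/idP/idP; last by move/eqP->; rewrite ll xl.
  case/andP=> lw xw; apply/eqP; apply: (at_most_one se iso lw ll).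
  by apply: connect_trans xl; rewrite cs.
exfalso.
case: (pickP (fun y => ~~ connect F x y)) => [y ny | allC]; last first.
  have [l ll] := leaf_exists tr cV.
  by have := none l; rewrite ll /=; have := allC l => /negbFE ->.
have /connectP[q qp qy] := con x y.
have [a [b [xa nxb eab]]] : exists a b, [/\ connect F x a, ~~ connect F x b & e a b].
  by apply: (boundary (connect0 F x) qp); rewrite -qy.
set s := [set a; b].
have sS : s \in S.
  apply/negPn/negP => ns; move: nxb; rewrite (connect_trans xa) //.
  by apply: connect1; rewrite /F /remove_edges eab ns.
apply: (minS (S :\ s)); first exact: properD1.
split; first by apply: subset_trans (subsetDl _ _) iso.1.
move=> u v p lu lv uv /and3P[pp up /eqP lp].
apply/negPn/negP => nm.
set F' := remove_edges e (S :\ s).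
have pF' : path F' u p := meet_path pp nm.
pose inCD w := connect F a w || connect F b w.
have key : forall q w0, connect F u w0 \/ (inCD u && inCD w0) -> path F' w0 q ->
    connect F u (last w0 q) \/ (inCD u && inCD (last w0 q)).
  elim=> [|y0 q0 IH] w0 //= H /andP[/andP[ew0y0 ns] pq0]; apply: IH pq0.
  case: (eqVneq [set w0; y0] s) => es.
    have yab : inCD y0.
      have : y0 \in s by rewrite -es set22.
      by rewrite !inE /inCD => /orP[] /eqP ->; rewrite connect0 ?orbT.
    have w0ab : inCD w0.
      have : w0 \in s by rewrite -es set21.
      by rewrite !inE /inCD => /orP[] /eqP ->; rewrite connect0 ?orbT.
    right; rewrite yab andbT.
    case: H => [uw0 | /andP[] //].
    move: w0ab; rewrite /inCD => /orP[] h; apply/orP; [left|right];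
      by apply: connect_trans h _; rewrite cs.
  have Fw0y0 : F w0 y0 by rewrite /F /remove_edges ew0y0; move: ns; rewrite in_setD1 es.
  case: H => [uw0 | /andP[iu iw0]].
    by left; apply: connect_trans uw0 (connect1 Fw0y0).
  right; rewrite iu /=; move: iw0; rewrite /inCD => /orP[] h; apply/orP; [left|right];
    exact: connect_trans h (connect1 Fw0y0).
have := key p u (or_introl (connect0 F u)) pF'; rewrite lp.
case=> [uv' | /andP[iu iv]].
  by move: uv; rewrite (at_most_one se iso lu lv uv') eqxx.
have nbu : forall w, is_leaf e w -> inCD w -> connect F b w.
  move=> w lw /orP[] // aw; have := none w; rewrite lw /=.
  by rewrite (connect_trans xa aw).
move: uv; rewrite (at_most_one se iso lu lv (v:=v)) ?eqxx //.
by apply: connect_trans (nbu v lv iv); rewrite cs; apply: nbu.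
Qed.
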